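(* Let $Q$ be an automorphic loop satisfying condition (C) (for all $a,b\in Q$: $a(ab)=(ba)a$ if and only if $ab=ba$), and let $x,y\in Q$. If $x(xy)=(yx)x$, then the subloop $\langle x,y\rangle$ generated by $x$ and $y$ is commutative.
   Context: A loop is a set with a binary operation in which all equations $ax=b$, $ya=b$ are uniquely solvable and which has a two-sided identity. For $a\in L$, $R_a:x\mapsto xa$, $L_a:x\mapsto ax$; the inner mapping group is the stabilizer of the identity in the group generated by all $R_a,L_a$. A loop is automorphic if every inner mapping is an automorphism. The subloop generated by a subset $S$ is the intersection of all subloops containing $S$. *)

(* Defs.v *)
Section Loops.
Variable T : Type.
Variable mul : T -> T -> T.
Variable e : T.

Definition is_loop : Prop :=
  (forall a b : T, exists! x : T, mul a x = b) /\
  (forall a b : T, exists! y : T, mul y a = b) /\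
  (forall x : T, mul e x = x /\ mul x e = x).

(* A permutation is recorded
   together with its inverse: [mlt f g] means f is in the group and g is
   its inverse map. *)
Inductive mlt : (T -> T) -> (T -> T) -> Prop :=
  | mlt_id : mlt (fun x => x) (fun x => x)
  | mlt_R : forall (a : T) (g : T -> T),
      (forall x, g (mul x a) = x) -> (forall x, mul (g x) a = x) ->
      mlt (fun x => mul x a) g
  | mlt_L : forall (a : T) (g : T -> T),
      (forall x, g (mul a x) = x) -> (forall x, mul a (g x) = x) ->
      mlt (fun x => mul a x) g
  | mlt_comp : forall f g f' g', mlt f g -> mlt f' g' ->
      mlt (fun x => f (f' x)) (fun x => g' (g x))
  | mlt_inv : forall f g, mlt f g -> mlt g f.

Definition inner_mapping (f : T -> T) : Prop :=
  (exists g, mlt f g) /\ f e = e.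

(* Automorphic loop: every inner mapping is an automorphism
   (inner mappings are bijections, so it suffices that they are
   multiplicative). *)
Definition automorphic : Prop :=
  forall f : T -> T, inner_mapping f ->
    forall x y : T, f (mul x y) = mul (f x) (f y).

Definition subloop (S : T -> Prop) : Prop :=
  S e /\
  (forall a b, S a -> S b -> S (mul a b)) /\
  (forall a b x, S a -> S b -> mul a x = b -> S x) /\
  (forall a b y, S a -> S b -> mul y a = b -> S y).

Definition gen2 (x y : T) (z : T) : Prop :=
  forall S : T -> Prop, subloop S -> S x -> S y -> S z.

Definition condC : Prop :=
  forall a b : T, mul a (mul a b) = mul (mul b a) a <-> mul a b = mul b a.

End Loops.
Arguments is_loop {T}. Arguments automorphic {T}. Arguments condC {T}. Arguments gen2 {T}. Arguments subloop {T}. Arguments inner_mapping {T}. Arguments mlt {T}.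

(* Main.v *)
Require Import Defs.
From Stdlib Require Import ClassicalEpsilon.

Section H.
Variables (T : Type) (mul : T -> T -> T) (e : T).
Hypothesis Hloop : is_loop mul e.
Hypothesis Haut : automorphic mul e.

Lemma ldiv_ex (a : T) : exists g : T -> T,
  (forall z, g (mul a z) = z) /\ (forall z, mul a (g z) = z).
Proof.
  destruct Hloop as [H1 [H2 H3]].
  exists (fun b => proj1_sig (constructive_indefinite_description _
             (let (w, Hw) := H1 a b in ex_intro _ w (proj1 Hw)))).
  split; intro z.
  - destruct (constructive_indefinite_description _ _) as [w Hw]; simpl.
    destruct (H1 a (mul a z)) as [w0 [_ U]].
    rewrite <- (U w Hw). apply U. reflexivity.
  - destruct (constructive_indefinite_description _ _) as [w Hw]; simpl. exact Hw.
Qed.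

Lemma rdiv_ex (a : T) : exists g : T -> T,
  (forall z, g (mul z a) = z) /\ (forall z, mul (g z) a = z).
Proof.
  destruct Hloop as [H1 [H2 H3]].
  exists (fun b => proj1_sig (constructive_indefinite_description _
             (let (w, Hw) := H2 a b in ex_intro _ w (proj1 Hw)))).
  split; intro z.
  - destruct (constructive_indefinite_description _ _) as [w Hw]; simpl.
    destruct (H2 a (mul z a)) as [w0 [_ U]].
    rewrite <- (U w Hw). apply U. reflexivity.
  - destruct (constructive_indefinite_description _ _) as [w Hw]; simpl. exact Hw.
Qed.

Lemma cent_subloop (u : T) : subloop mul e (fun z => mul z u = mul u z).
Proof.
  destruct (ldiv_ex u) as [Li [Li1 Li2]].
  destruct (rdiv_ex u) as [Ri [Ri1 Ri2]].
  set (f := fun z => Li (mul z u)).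
  assert (Hin : inner_mapping mul e f).
  { split.
    - exists (fun z => Ri (mul u z)).
      unfold f. apply (mlt_comp T mul _ _ _ _ (mlt_inv T mul _ _ (mlt_L T mul u Li Li1 Li2))
                        (mlt_R T mul u Ri Ri1 Ri2)).
    - unfold f. destruct Hloop as [_ [_ H3]].
      rewrite (proj1 (H3 u)). rewrite <- (proj2 (H3 u)) at 1. apply Li1. }
  assert (Fix : forall z, f z = z <-> mul z u = mul u z).
  { intro z; unfold f; split; intro H.
    - rewrite <- H at 2. rewrite Li2. reflexivity.
    - rewrite H. apply Li1. }
  assert (Hm := Haut f Hin).
  destruct Hloop as [H1 [H2 H3]].
  split; [|split; [|split]].
  - apply Fix. apply (proj2 Hin).
  - intros a b Ha Hb. apply Fix. rewrite Hm.
    rewrite (proj2 (Fix a) Ha), (proj2 (Fix b) Hb). reflexivity.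
  - intros a b z Ha Hb Hab. apply Fix.
    destruct (H1 a b) as [w [_ U]].
    pose proof (U z Hab) as wz; subst w. symmetry. apply U.
    rewrite <- (proj2 (Fix a) Ha) at 1. rewrite <- Hm, Hab. apply Fix, Hb.
  - intros a b z Ha Hb Hab. apply Fix.
    destruct (H2 a b) as [w [_ U]].
    pose proof (U z Hab) as wz; subst w. symmetry. apply U.
    rewrite <- (proj2 (Fix a) Ha) at 1. rewrite <- Hm, Hab. apply Fix, Hb.
Qed.
End H.

Theorem lemma3p3 (T : Type) (mul : T -> T -> T) (e : T)
  (Hloop : is_loop mul e) (Haut : automorphic mul e) (HC : condC mul)
  (x y : T) (Hxy : mul x (mul x y) = mul (mul y x) x) :
  forall u v : T, gen2 mul e x y u -> gen2 mul e x y v -> mul u v = mul v u.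
Proof.
  assert (Hc : mul x y = mul y x) by (apply (proj1 (HC x y)); exact Hxy).
  assert (Ax : forall u, gen2 mul e x y u -> mul u x = mul x u).
  { intros u Hu. apply (Hu _ (cent_subloop T mul e Hloop Haut x)); auto. }
  assert (Ay : forall u, gen2 mul e x y u -> mul u y = mul y u).
  { intros u Hu. apply (Hu _ (cent_subloop T mul e Hloop Haut y)); auto. }
  intros u v Hu Hv.
  symmetry.
  apply (Hv _ (cent_subloop T mul e Hloop Haut u)).
  - symmetry; apply Ax; exact Hu.
  - symmetry; apply Ay; exact Hu.
Qed.
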